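(* Let $\psi\in L^2(\mu)$ be a non-constant real-valued function with $|\psi|=1$, and let $\hat\psi$ be the orthogonal projection $\phi\mapsto\langle\phi,\psi\rangle\psi$. Then $$\big\|[\mathcal D,\pi(\hat\psi)]\big\| = \big\|K\hat\psi-\hat\psi K\big\| = \sup_{\phi\in L^2(\mu),\,|\phi|=1}\sqrt{\langle\phi,\psi\rangle^2-2\langle\phi,\psi\rangle\langle K\phi,\psi\rangle\langle K\psi,\psi\rangle+\langle K\phi,\psi\rangle^2}.$$
   Context: $\Omega=\{0,1\}^{\mathbb N}$ with the shift $\sigma(x_1,x_2,\dots)=(x_2,x_3,\dots)$; for $a\in\{0,1\}$ and $x\in\Omega$, $ax=(a,x_1,x_2,\dots)$. $\mu$ is the measure of maximal entropy of $\sigma$ (the product of the uniform measure $(1/2,1/2)$ on $\{0,1\}$). $L^2(\mu)$ is the real Hilbert space of square-integrable real functions, with inner product $\langle\cdot,\cdot\rangle$ and norm $|\cdot|$. The Ruelle operator is $L\phi(x)=\frac12(\phi(0x)+\phi(1x))$ and the Koopman operator is $K\phi=\phi\circ\sigma$; both are bounded on $L^2(\mu)$ and $K$ is the adjoint of $L$. On $\mathcal H=L^2(\mu)\times L^2(\mu)$, with norm $|(\phi_1,\phi_2)|^2=|\phi_1|^2+|\phi_2|^2$, the Dirac operator is $\mathcal D(\phi_1,\phi_2)=(K\phi_2,L\phi_1)$, i.e. $\mathcal D=\begin{pmatrix}0&K\\ L&0\end{pmatrix}$, and for a bounded operator $A$ on $L^2(\mu)$, $\pi(A)=\begin{pmatrix}A&0\\0&A\end{pmatrix}$.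 Then $[\mathcal D,\pi(A)]=\mathcal D\pi(A)-\pi(A)\mathcal D=\begin{pmatrix}0&KA-AK\\ LA-AL&0\end{pmatrix}$. $\|\cdot\|$ denotes the operator norm. *)

(* Defs.v *)
From HB Require Import structures.
From mathcomp Require Import all_boot all_order all_algebra.
From mathcomp Require Import all_classical all_reals all_analysis.
Set Implicit Arguments. Unset Strict Implicit. Unset Printing Implicit Defensive.
Import Order.TTheory GRing.Theory Num.Theory.
Local Open Scope classical_set_scope.
Local Open Scope ring_scope.

(* Omega = {0,1}^N ; a point x is the sequence (x 0, x 1, ...) = (x_1, x_2, ...) *)
Definition Omega0 := nat -> bool.

Definition cyl (n : nat) (w : Omega0) : set Omega0 :=
  [set x | forall i, (i < n)%N -> x i = w i].
Definition cylinders : set (set Omega0) :=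
  [set A | exists n w, A = cyl n w].

Definition Omega := g_sigma_algebraType cylinders.

Definition shift (x : Omega) : Omega := fun n => x n.+1.
Definition pre (a : bool) (x : Omega) : Omega :=
  fun n => if n is k.+1 then x k else a.

Section L2.
Context {R : realType}.
Variable mu : {measure set Omega -> \bar R}.

Definition L2 (f : Omega -> R) : Prop :=
  measurable_fun setT f /\
  mu.-integrable setT (fun x => ((f x) ^+ 2)%:E).

Definition inner (f g : Omega -> R) : R :=
  fine (\int[mu]_x ((f x * g x)%:E)).
Definition norm2 (f : Omega -> R) : R := Num.sqrt (inner f f).

Definition Kop (f : Omega -> R) : Omega -> R := fun x => f (shift x).
Definition Lop (f : Omega -> R) : Omega -> R :=
  fun x => (f (pre false x) + f (pre true x)) / 2.

Definition rproj (psi : Omega -> R) (f : Omega -> R) : Omega -> R :=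
  fun x => inner f psi * psi x.

Definition opnorm (T : (Omega -> R) -> (Omega -> R)) : R :=
  sup [set norm2 (T f) | f in [set f | L2 f /\ norm2 f = 1]].

Definition Hnorm (p : (Omega -> R) * (Omega -> R)) : R :=
  Num.sqrt (norm2 p.1 ^+ 2 + norm2 p.2 ^+ 2).
Definition opnormH
  (T : (Omega -> R) * (Omega -> R) -> (Omega -> R) * (Omega -> R)) : R :=
  sup [set Hnorm (T p) | p in [set p | L2 p.1 /\ L2 p.2 /\ Hnorm p = 1]].

(* Dirac operator D = [[0, K], [L, 0]] and pi(A) = diag(A, A) *)
Definition Dirac (p : (Omega -> R) * (Omega -> R)) :=
  (Kop p.2, Lop p.1).
Definition piop (A : (Omega -> R) -> (Omega -> R))
  (p : (Omega -> R) * (Omega -> R)) := (A p.1, A p.2).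

Definition commD (A : (Omega -> R) -> (Omega -> R))
  (p : (Omega -> R) * (Omega -> R)) :=
  ((Dirac (piop A p)).1 - (piop A (Dirac p)).1,
   (Dirac (piop A p)).2 - (piop A (Dirac p)).2).

End L2.

(* Main.v *)
Require Import Defs.
From HB Require Import structures.
From mathcomp Require Import all_boot all_order all_algebra.
From mathcomp Require Import all_classical all_reals all_analysis.
From mathcomp Require Import measurable_realfun ring lra.
Import Order.TTheory GRing.Theory Num.Theory.
Local Open Scope classical_set_scope.
Local Open Scope ring_scope.

Section L2alg.
Context {R : realType} (mu : {measure set Omega -> \bar R}).
Local Notation L2 := (L2 mu).
Local Notation I := (inner mu).

Lemma L2_meas f : L2 f -> measurable_fun setT f.
Proof. by case. Qed.

Lemma sq_bound (a b : R) : `|a * b| <= `|a ^+ 2 + b ^+ 2|.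
Proof.
rewrite (ger0_norm (addr_ge0 (sqr_ge0 _) (sqr_ge0 _))) normrM.
have ha := normr_ge0 a; have hb := normr_ge0 b.
have ea := real_normK (num_real a); have eb := real_normK (num_real b).
nra.
Qed.

Lemma L2_int f g : L2 f -> L2 g -> mu.-integrable setT (fun x => (f x * g x)%:E).
Proof.
move=> [mf If] [mg Ig].
apply: (@le_integrable _ _ _ mu setT measurableT _ (fun x => (f x ^+ 2 + g x ^+ 2)%:E)).
- by apply/measurable_EFinP; exact: measurable_funM.
- by move=> x _; rewrite !abse_EFin lee_fin sq_bound.
- exact: (integrableD measurableT If Ig).
Qed.

Lemma L2_intE f g : L2 f -> L2 g -> mu.-integrable setT (EFin \o (fun x => f x * g x)).
Proof. exact: L2_int. Qed.

Lemma L2D f g : L2 f -> L2 g -> L2 (fun x => f x + g x).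
Proof.
move=> hf hg; split; first by apply: measurable_funD; [case: hf|case: hg].
have e : (fun x => ((f x + g x) ^+ 2)%:E) =
   ((fun x => (f x * f x)%:E) \+ ((fun x => 2%:E * (f x * g x)%:E) \+ (fun x => (g x * g x)%:E)))%E.
  by apply/funext => x /=; rewrite -EFinM -!EFinD; congr EFin; rewrite sqrrD; ring.
rewrite e; apply: integrableD => //; first exact: L2_int.
apply: integrableD => //; last exact: L2_int.
by apply: integrableZl => //; exact: L2_int.
Qed.

Lemma L2Z c f : L2 f -> L2 (fun x => c * f x).
Proof.
move=> [mf If]; split; first by apply: measurable_funM => //; exact: measurable_cst.
have e : (fun x => ((c * f x) ^+ 2)%:E) = (fun x => (c ^+ 2)%:E * (f x ^+ 2)%:E)%E.
  by apply/funext => x; rewrite -EFinM exprMn.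
by rewrite e; apply: integrableZl.
Qed.

Lemma L2_0 : L2 (fun _ => 0).
Proof.
split; first exact: measurable_cst.
have -> : (fun _ : Omega => ((0:R) ^+ 2)%:E) = cst 0%E by apply/funext => x; rewrite /= expr0n.
exact: integrable0.
Qed.

Lemma innerC f g : I f g = I g f.
Proof. by rewrite /inner; under eq_integral do rewrite mulrC. Qed.

Lemma innerDl u v h : L2 u -> L2 v -> L2 h ->
  I (fun x => u x + v x) h = I u h + I v h.
Proof.
move=> hu hv hh.
rewrite /inner -[LHS]/(Rintegral mu setT (fun x => (u x + v x) * h x)).
under eq_Rintegral do rewrite mulrDl.
by rewrite RintegralD //; exact: L2_int.
Qed.

Lemma innerZl c u h : L2 u -> L2 h -> I (fun x => c * u x) h = c * I u h.
Proof.
move=> hu hh.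
rewrite /inner -[LHS]/(Rintegral mu setT (fun x => (c * u x) * h x)).
under eq_Rintegral do rewrite -mulrA.
by rewrite RintegralZl //; exact: L2_int.
Qed.

Lemma inner0l h : I (fun _ => 0) h = 0.
Proof. by rewrite /inner; under eq_integral do rewrite mul0r; rewrite integral0. Qed.

Lemma inner_ge0 f : 0 <= I f f.
Proof. by rewrite /inner fine_ge0 // integral_ge0 // => x _; rewrite lee_fin -expr2 sqr_ge0. Qed.

Lemma inner_lin a b u v h : L2 u -> L2 v -> L2 h ->
  I (fun x => a * u x + b * v x) h = a * I u h + b * I v h.
Proof.
move=> hu hv hh; rewrite innerDl ?innerZl //; exact: L2Z.
Qed.

Lemma inner_linr a b u v h : L2 u -> L2 v -> L2 h ->
  I h (fun x => a * u x + b * v x) = a * I h u + b * I h v.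
Proof.
move=> hu hv hh; rewrite innerC inner_lin //.
by rewrite (innerC u) (innerC v).
Qed.

Lemma inner_quad a b u v : L2 u -> L2 v ->
  I (fun x => a * u x + b * v x) (fun x => a * u x + b * v x) =
  a ^+ 2 * I u u + 2 * a * b * I u v + b ^+ 2 * I v v.
Proof.
move=> hu hv; have hw : L2 (fun x => a * u x + b * v x) by apply: L2D; apply: L2Z.
rewrite inner_lin // [I u _]innerC [I v _]innerC !inner_lin // [I v u]innerC.
ring.
Qed.

Lemma CS f g : L2 f -> L2 g -> I f g ^+ 2 <= I f f * I g g.
Proof.
move=> hf hg.
have H t : 0 <= I f f + 2 * t * I f g + t ^+ 2 * I g g.
  have := inner_ge0 (fun x => 1 * f x + t * g x).
  rewrite (inner_quad 1 t _ _ hf hg).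
  by rewrite expr1n !mul1r mulr1.
have hgg := inner_ge0 g; have hff := inner_ge0 f.
move: H hgg hff; set a := I f f; set b := I f g; set c := I g g => H hc ha.
have [c0|cpos] := eqVneq c 0.
  rewrite c0 mulr0.
  have [b0|bn0] := eqVneq b 0; first by rewrite b0 expr0n.
  have := H (- (a + 1) / (2 * b)).
  have e : 2 * (- (a + 1) / (2 * b)) * b = - (a + 1) by field; rewrite bn0.
  rewrite c0 mulr0 addr0 e; lra.
have cp : 0 < c by rewrite lt_def cpos.
have := H (- b / c).
have e : 2 * (- b / c) * b + (- b / c) ^+ 2 * c = - (b ^+ 2) / c.
  by field.
rewrite -addrA e => h.
have : b ^+ 2 / c <= a by lra.
by rewrite ler_pdivrMr // mulrC.
Qed.
End L2alg.

Lemma cyl_meas n (w : Omega0) : measurable (cyl n w : set Omega).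
Proof. by apply: sub_sigma_algebra; exists n, w. Qed.

Lemma mfun_cyl (F : Omega -> Omega) :
  (forall n w, measurable (F @^-1` cyl n w)) -> measurable_fun setT F.
Proof.
move=> h; apply: (@measurability _ _ Omega Omega setT F cylinders) => //.
by move=> _ [A [n [w ->]] <-]; rewrite setTI; exact: h.
Qed.

Lemma shift_cylE n (w : Omega0) :
  Defs.shift @^-1` cyl n w = cyl n.+1 (Defs.pre false w) `|` cyl n.+1 (Defs.pre true w).
Proof.
apply/seteqP; split => x /=.
  move=> hx; case hx0: (x 0%N); [right|left] => -[|i] /= hi //; exact: hx.
by case=> hx i hi; have := hx i.+1 hi; rewrite /Defs.shift /Defs.pre.
Qed.

Lemma pre_cyl0 a (w : Omega0) : Defs.pre a @^-1` cyl 0 w = setT.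
Proof. by apply/seteqP; split => x //= _ i. Qed.

Lemma pre_cylS a n (w : Omega0) :
  Defs.pre a @^-1` cyl n.+1 w = if a == w 0%N then cyl n (Defs.shift w) else set0.
Proof.
apply/seteqP; split => x /=.
  move=> hx; have := hx 0%N erefl; rewrite /pre => ->; rewrite eqxx.
  by move=> i hi; exact: (hx i.+1 hi).
case: eqP => [->|//] hx [|i] hi //=; exact: hx.
Qed.

Lemma mshift : measurable_fun setT Defs.shift.
Proof. by apply: mfun_cyl => n w; rewrite shift_cylE; apply: measurableU; exact: cyl_meas. Qed.

Lemma mpre a : measurable_fun setT (Defs.pre a).
Proof.
apply: mfun_cyl => -[|n] w; first by rewrite pre_cyl0.
by rewrite pre_cylS; case: eqP => _; [exact: cyl_meas|exact: measurable0].
Qed.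

Definition Gc : set (set Omega) := cylinders `|` [set set0].

Lemma GcE : (@measurable _ Omega) = <<s Gc >>.
Proof.
apply/seteqP; split.
  apply: smallest_sub; first exact: smallest_sigma_algebra.
  by move=> A hA; apply: sub_sigma_algebra; left.
apply: smallest_sub; first exact: smallest_sigma_algebra.
move=> A [hA|->]; first exact: sub_sigma_algebra.
exact: sigma_algebra0.
Qed.

Lemma cylI_le n m (w v : Omega0) : (n <= m)%N ->
  Gc (cyl n w `&` cyl m v).
Proof.
move=> nm.
have [h|h] := pselect (forall i, (i < n)%N -> w i = v i).
  left; exists m, v; apply/seteqP; split => x /=; first by case.
  move=> hx; split => // i hi; rewrite h //; apply: hx; exact: leq_trans hi nm.
right; apply/seteqP; split => x //= [hx1 hx2]; apply: h => i hi.
by rewrite -hx1 // hx2 //; exact: leq_trans hi nm.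
Qed.

Lemma Gc_setI : setI_closed Gc.
Proof.
move=> A B [[n [w ->]]|->] [[m [v ->]]|->]; try by right; rewrite ?set0I ?setI0.
have [nm|mn] := leqP n m; first exact: cylI_le.
by rewrite setIC; apply: cylI_le; exact: ltnW.
Qed.

Lemma cyl0T (w : Omega0) : cyl 0 w = setT.
Proof. by apply/seteqP; split => x //= _ i. Qed.

Section Key.
Context {R : realType} (mu : {measure set Omega -> \bar R}).
Hypothesis hmu : forall (n : nat) (w : Omega0), mu (cyl n w) = ((2 : R) ^- n)%:E.

Definition pf a : {measure set Omega -> \bar R} :=
  @measure_function_pushforward__canonical__measure_function_Measure _ _ Omega Omega R mu (Defs.pre a) (mpre a).

Lemma muT : mu setT = 1%:E.
Proof. by rewrite -(cyl0T (fun _ => false)) hmu expr0 invr1. Qed.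

Lemma madd_fin (m1 m2 : {measure set Omega -> \bar R}) :
  (m1 setT < +oo -> m2 setT < +oo -> measure_add m1 m2 setT < +oo)%E.
Proof. by move=> h1 h2; rewrite measure_addE lte_add_pinfty. Qed.

Lemma mu_agree B : Gc B ->
  measure_add mu mu B = measure_add (pf false) (pf true) B.
Proof.
move=> [[n [w ->]]|->]; last by rewrite !measure_addE !measure0.
rewrite !measure_addE /pf /= /pushforward.
case: n => [|n]; first by rewrite !pre_cyl0 muT cyl0T muT.
rewrite !pre_cylS hmu.
have e : ((2:R) ^- n.+1)%:E + ((2:R) ^- n.+1)%:E = ((2:R) ^- n)%:E.
  rewrite -EFinD; congr EFin; rewrite exprS invfM.
  field; exact: expf_neq0.
by case: (w 0%N) => /=; rewrite ?measure0 hmu ?adde0 ?add0e e.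
Qed.

Lemma mu_fin (k : nat) : (measure_add mu mu ((fun _ : nat => setT) k) < +oo)%E.
Proof. by rewrite measure_addE muT -EFinD ltry. Qed.

Lemma Gc_T (k : nat) : Gc ((fun _ : nat => setT) k).
Proof. by left; exists 0%N, (fun _ => false); rewrite cyl0T. Qed.

Lemma cover_T : \bigcup_(k : nat) ((fun _ : nat => @setT Omega) k) = setT.
Proof. by rewrite bigcup_const. Qed.

Lemma mu_eq A : measurable A ->
  measure_add mu mu A = measure_add (pf false) (pf true) A.
Proof.
exact: (@measure_unique _ R Omega Gc (fun _ => setT) GcE Gc_setI Gc_T cover_T
  (measure_add mu mu) (measure_add (pf false) (pf true)) mu_agree mu_fin A).
Qed.

Lemma KEYp (h : Omega -> \bar R) : measurable_fun setT h -> (forall x, 0 <= h x)%E ->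
  (\int[mu]_x h x + \int[mu]_x h x =
   \int[mu]_x h (Defs.pre false x) + \int[mu]_x h (Defs.pre true x))%E.
Proof.
move=> mh h0.
rewrite -ge0_integral_measure_add //.
rewrite (eq_measure_integral (measure_add (pf false) (pf true))); last first.
  by move=> A mA _; exact: mu_eq.
rewrite ge0_integral_measure_add //.
rewrite (ge0_integral_pushforward (mpre false)) //.
by rewrite (ge0_integral_pushforward (mpre true)).
Qed.


Lemma dbl_inj (a b : \bar R) : (0 <= a)%E -> (0 <= b)%E -> (a + a = b + b)%E -> a = b.
Proof.
case: a => [a| |] //; case: b => [b| |] //= ha hb; rewrite -?EFinD //.
by move=> -[e]; congr EFin; lra.
Qed.

Lemma Kop_sq (f : Omega -> R) : measurable_fun setT f ->
  (\int[mu]_x ((Kop f x) ^+ 2)%:E = \int[mu]_x (f x ^+ 2)%:E)%E.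
Proof.
move=> mf.
have mh : measurable_fun setT (fun x => ((Kop f x) ^+ 2)%:E).
  apply/measurable_EFinP; apply: measurable_funX; exact: measurableT_comp mf mshift.
apply: dbl_inj.
- by apply: integral_ge0 => x _; rewrite lee_fin sqr_ge0.
- by apply: integral_ge0 => x _; rewrite lee_fin sqr_ge0.
by rewrite (KEYp _ mh) // => x; rewrite lee_fin sqr_ge0.
Qed.

Lemma L2K f : L2 mu f -> L2 mu (Kop f).
Proof.
move=> [mf If]; split; first exact: measurableT_comp mf mshift.
apply/integrableP; split.
  apply/measurable_EFinP; apply: measurable_funX; exact: measurableT_comp mf mshift.
under eq_integral do rewrite abse_EFin (ger0_norm (sqr_ge0 _)).
rewrite Kop_sq //.
move/integrableP: If => [_]; apply: le_lt_trans.
suff -> : (\int[mu]_x `|(f x ^+ 2)%:E| = \int[mu]_x (f x ^+ 2)%:E)%E by [].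
by apply: eq_integral => x _; rewrite abse_EFin (ger0_norm (sqr_ge0 _)).
Qed.

Lemma innerKK f : L2 mu f -> inner mu (Kop f) (Kop f) = inner mu f f.
Proof.
move=> [mf _]; rewrite /inner.
under eq_integral do rewrite -expr2.
by rewrite Kop_sq.
Qed.

Lemma L2pre a f : L2 mu f -> L2 mu (fun x => f (Defs.pre a x)).
Proof.
move=> [mf If].
have mg b : measurable_fun setT (fun x => f (Defs.pre b x)) by exact: measurableT_comp mf (mpre b).
have mh b : measurable_fun setT (fun x => ((f (Defs.pre b x)) ^+ 2)%:E).
  by apply/measurable_EFinP; apply: measurable_funX.
split => //.
apply/integrableP; split => //.
under eq_integral do rewrite abse_EFin (ger0_norm (sqr_ge0 _)).
have mf2 : measurable_fun setT (fun x => (f x ^+ 2)%:E).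
  by apply/measurable_EFinP; apply: measurable_funX.
have := KEYp _ mf2 (fun x => (_ : (0 <= _)%E)).
have h0 x : (0 <= (f x ^+ 2)%:E)%E by rewrite lee_fin sqr_ge0.
move=> /(_ h0) e.
have hfin : (\int[mu]_x (f x ^+ 2)%:E + \int[mu]_x (f x ^+ 2)%:E < +oo)%E.
  move/integrableP: If => [_ hI].
  have e2 : (\int[mu]_x `|(f x ^+ 2)%:E| = \int[mu]_x (f x ^+ 2)%:E)%E.
    by apply: eq_integral => x _; rewrite abse_EFin (ger0_norm (sqr_ge0 _)).
  by rewrite e2 in hI; rewrite lte_add_pinfty.
rewrite e in hfin.
have g0 b : (0 <= \int[mu]_x ((f (Defs.pre b x)) ^+ 2)%:E)%E.
  by apply: integral_ge0 => x _; rewrite lee_fin sqr_ge0.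
case: a.
- apply: le_lt_trans hfin; rewrite -[X in (X <= _)%E]add0e.
  by apply: leeD => //.
- apply: le_lt_trans hfin; rewrite -[X in (X <= _)%E]adde0.
  by apply: leeD => //.
Qed.

Lemma KEYi (u : Omega -> R) : measurable_fun setT u ->
  mu.-integrable setT (EFin \o u) ->
  (forall a, mu.-integrable setT (EFin \o (fun x => u (Defs.pre a x)))) ->
  2 * Rintegral mu setT u =
  Rintegral mu setT (fun x => u (Defs.pre false x)) + Rintegral mu setT (fun x => u (Defs.pre true x)).
Proof.
move=> mu_ iu ia.
have mE : measurable_fun setT (EFin \o u) by apply/measurable_EFinP.
have ip a : (pf a).-integrable setT (EFin \o u).
  exact: (integrable_pushforward (mpre a) mE (ia a) measurableT).
have e : (\int[mu]_x (u x)%:E + \int[mu]_x (u x)%:E =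
   \int[mu]_x (u (Defs.pre false x))%:E + \int[mu]_x (u (Defs.pre true x))%:E)%E.
  rewrite -(integral_measure_add measurableT iu iu).
  rewrite (eq_measure_integral (measure_add (pf false) (pf true))); last first.
    by move=> A mA _; exact: mu_eq.
  rewrite (integral_measure_add measurableT (ip false) (ip true)).
  rewrite (integral_pushforward (mpre false) mE (ia false) measurableT).
  by rewrite (integral_pushforward (mpre true) mE (ia true) measurableT).
have f0 := integrable_fin_num measurableT iu.
have f1 := integrable_fin_num measurableT (ia false).
have f2 := integrable_fin_num measurableT (ia true).
transitivity (fine (\int[mu]_x (u x)%:E + \int[mu]_x (u x)%:E)%E).
  by rewrite fineD // /Rintegral mulr2n mulrDl mul1r.
by rewrite e fineD.
Qed.

Lemma L2L f : L2 mu f -> L2 mu (Lop f).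
Proof.
move=> hf.
have -> : Lop f = (fun x => 2^-1 * f (Defs.pre false x) + 2^-1 * f (Defs.pre true x)).
  by apply/funext => x; rewrite /Lop; ring.
by apply: L2D; apply: L2Z; exact: L2pre.
Qed.

Lemma adjKL f g : L2 mu f -> L2 mu g -> inner mu (Kop f) g = inner mu f (Lop g).
Proof.
move=> hf hg.
have hKf := L2K _ hf.
have h0 := L2pre false _ hg; have h1 := L2pre true _ hg.
have := @KEYi (fun x => Kop f x * g x) (measurable_funM (L2_meas mu _ hKf) (L2_meas mu _ hg))
   (L2_int mu _ _ hKf hg).
move=> /(_ (fun a => L2_int mu _ _ hf (L2pre a _ hg))).
rewrite -/(inner mu (Kop f) g) -/(inner mu f (fun x => g (Defs.pre false x))).
rewrite -/(inner mu f (fun x => g (Defs.pre true x))) => e.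
have -> : Lop g = (fun x => 2^-1 * g (Defs.pre false x) + 2^-1 * g (Defs.pre true x)).
  by apply/funext => x; rewrite /Lop; ring.
rewrite [RHS]innerC inner_lin // ![inner mu (fun x => g _) f]innerC.
move: e; set a := inner mu (Kop f) g => e.
rewrite -mulrDr -e mulrA mulVf ?mul1r //.
Qed.
End Key.

Lemma sq_le {R : realType} {x y : R} : 0 <= y -> x ^+ 2 <= y ^+ 2 -> x <= y.
Proof. move=> hy h; rewrite leNgt; apply/negP => hxy; nra. Qed.

Lemma neg_le_sq {R : realType} {x y : R} : 0 <= y -> x ^+ 2 <= y ^+ 2 -> - x <= y.
Proof. move=> hy h; apply: sq_le => //; by rewrite sqrrN. Qed.

Lemma le_sq {R : realType} {x y : R} : 0 <= x -> x <= y -> x ^+ 2 <= y ^+ 2.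
Proof. move=> hx hxy; nra. Qed.

Section Main.
Context {R : realType} (mu : {measure set Omega -> \bar R}).
Hypothesis hmu : forall (n : nat) (w : Omega0), mu (cyl n w) = ((2 : R) ^- n)%:E.
Variable psi : Omega -> R.
Hypothesis hpsi : L2 mu psi.
Hypothesis hn1 : norm2 mu psi = 1.

Local Notation I := (inner mu).
Local Notation N := (norm2 mu).
Local Notation L2 := (L2 mu).

Lemma subfE (f g : Omega -> R) x : (f - g) x = f x - g x.
Proof. by []. Qed.

Definition Aop f := Kop (rproj mu psi f) - rproj mu psi (Kop f).
Definition Cop f := Lop (rproj mu psi f) - rproj mu psi (Lop f).
Definition cc := I (Kop psi) psi.
Definition qf (a b : R) := a ^+ 2 - 2 * a * b * cc + b ^+ 2.

Lemma N_ge0 h : 0 <= N h.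
Proof. exact: sqrtr_ge0. Qed.

Lemma nsq h : N h ^+ 2 = I h h.
Proof. exact/sqr_sqrtr/inner_ge0. Qed.

Lemma Ipp : I psi psi = 1.
Proof. by rewrite -nsq hn1 expr1n. Qed.

Lemma AE f : Aop f = fun x => I f psi * Kop psi x + (- I (Kop f) psi) * psi x.
Proof. by apply/funext => x; rewrite /Aop subfE /rproj /Kop; ring. Qed.

Lemma CE f : Cop f = fun x => I f psi * Lop psi x + (- I (Lop f) psi) * psi x.
Proof. by apply/funext => x; rewrite /Cop subfE /rproj /Lop; ring. Qed.

Lemma L2A f : L2 f -> L2 (Aop f).
Proof. by move=> hf; rewrite AE; apply: L2D; apply: L2Z => //; exact: L2K. Qed.

Lemma L2C f : L2 f -> L2 (Cop f).
Proof. by move=> hf; rewrite CE; apply: L2D; apply: L2Z => //; exact: L2L. Qed.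

Lemma QA f : L2 f -> I (Aop f) (Aop f) = qf (I f psi) (I (Kop f) psi).
Proof.
move=> hf; rewrite AE inner_quad //; last exact: L2K.
by rewrite innerKK // Ipp /qf /cc; ring.
Qed.

Lemma adjAC f g : L2 f -> L2 g -> I (Aop f) g = - I f (Cop g).
Proof.
move=> hf hg.
have hK := L2K mu hmu _ hpsi; have hL := L2L mu hmu _ hpsi.
rewrite AE CE inner_lin // inner_linr //.
rewrite (adjKL mu hmu _ _ hpsi hg) (adjKL mu hmu _ _ hf hpsi).
rewrite (innerC mu psi (Lop g)) (innerC mu psi g).
ring.
Qed.

Lemma a_bound f : L2 f -> I f psi ^+ 2 <= I f f.
Proof. by move=> hf; have := CS mu _ _ hf hpsi; rewrite Ipp mulr1. Qed.

Lemma b_bound f : L2 f -> I (Kop f) psi ^+ 2 <= I f f.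
Proof.
move=> hf; have := CS mu _ _ (L2K mu hmu _ hf) hpsi; rewrite Ipp mulr1 innerKK //.
Qed.

Lemma c_bound : cc ^+ 2 <= 1.
Proof. by have := b_bound _ hpsi; rewrite Ipp. Qed.

Definition Sset := [set N (Aop f) | f in [set f | L2 f /\ N f = 1]].

Lemma S_ub x : Sset x -> x <= 2.
Proof.
move=> [f [hf nf] <-].
have h1 : I f f = 1 by rewrite -nsq nf expr1n.
apply: sq_le => //.
rewrite nsq QA // /qf.
have ha := a_bound _ hf; have hb := b_bound _ hf; have hc := c_bound.
rewrite h1 in ha hb.
set a := I f psi in ha *; set b := I (Kop f) psi in hb *.
have := sqr_ge0 (a * cc + b); have := sqr_ge0 a; have := sqr_ge0 b.
have := sqr_ge0 cc.
nra.
Qed.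

Lemma S_has : has_ubound Sset.
Proof. by exists 2 => x /S_ub. Qed.

Lemma psi_in : [set f | L2 f /\ N f = 1] psi.
Proof. by []. Qed.

Lemma S_ne : Sset !=set0.
Proof. by exists (N (Aop psi)); exists psi. Qed.

Definition M := sup Sset.

Lemma M_ge f : L2 f -> N f = 1 -> N (Aop f) <= M.
Proof. by move=> hf nf; apply: ub_le_sup; [exact: S_has|exists f]. Qed.

Lemma M_ge0 : 0 <= M.
Proof. exact: le_trans (N_ge0 _) (M_ge _ hpsi hn1). Qed.

Lemma A_bound h : L2 h -> N (Aop h) <= M * N h.
Proof.
move=> hh.
have [n0|npos] := eqVneq (N h) 0.
  have e : I h h = 0 by rewrite -nsq n0 expr0n.
  have ha := a_bound _ hh; have hb := b_bound _ hh; rewrite e in ha hb.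
  have a0 : I h psi = 0.
    by apply/eqP; rewrite -sqrf_eq0 eq_le ha sqr_ge0.
  have b0 : I (Kop h) psi = 0.
    by apply/eqP; rewrite -sqrf_eq0 eq_le hb sqr_ge0.
  rewrite n0 mulr0; apply: sq_le => //.
  by rewrite nsq QA // a0 b0 /qf expr0n /= !mulr0 mul0r subr0 addr0.
have np : 0 < N h by rewrite lt_def npos N_ge0.
set n := N h in np npos *.
pose h' := fun x => n^-1 * h x.
have hh' : L2 h' by exact: L2Z.
have nh' : N h' = 1.
  rewrite /norm2 /h' innerZl // innerC innerZl // -nsq -/n.
  suff -> : n^-1 * (n^-1 * n ^+ 2) = 1 by rewrite sqrtr1.
  by field.
have := M_ge _ hh' nh'.
move=> hM.
apply: sq_le; first by apply: mulr_ge0; [exact: M_ge0|exact: ltW].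
rewrite nsq QA //.
have e1 : I h' psi = n^-1 * I h psi by rewrite /h' innerZl.
have e2 : I (Kop h') psi = n^-1 * I (Kop h) psi.
  by rewrite (_ : Kop h' = fun x => n^-1 * Kop h x) // innerZl //; exact: L2K.
have := le_sq (N_ge0 _) hM.
rewrite nsq QA // e1 e2 /qf.
set a := I h psi; set b := I (Kop h) psi => H.
have eq : a ^+ 2 - 2 * a * b * cc + b ^+ 2 =
   n ^+ 2 * ((n^-1 * a) ^+ 2 - 2 * (n^-1 * a) * (n^-1 * b) * cc + (n^-1 * b) ^+ 2).
  by field.
rewrite eq [X in _ <= X]exprMn (mulrC (M ^+ 2)).
by apply: ler_wpM2l => //; exact: sqr_ge0.
Qed.

Lemma C_bound g : L2 g -> N (Cop g) <= M * N g.
Proof.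
move=> hg.
set u := Cop g.
have hu : L2 u by exact: L2C.
have e : N u ^+ 2 = - I (Aop u) g by rewrite nsq adjAC // opprK.
have cs : I (Aop u) g ^+ 2 <= (N (Aop u) * N g) ^+ 2.
  by rewrite exprMn !nsq; apply: CS => //; exact: L2A.
have h1 := neg_le_sq (mulr_ge0 (N_ge0 _) (N_ge0 _)) cs.
have h2 := A_bound _ hu.
have hg0 : 0 <= N g by exact: N_ge0.
have h3 : N (Aop u) * N g <= M * N u * N g := ler_wpM2r hg0 h2.
have hx := N_ge0 u; have hy := N_ge0 g; have hM := M_ge0.
have H : N u ^+ 2 <= N u * (M * N g).
  rewrite e; apply: (le_trans h1); apply: (le_trans h3).
  by rewrite [M * N u]mulrC -mulrA.
rewrite leNgt; apply/negP => hlt.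
have hx0 : 0 < N u := le_lt_trans (mulr_ge0 hM hy) hlt.
have : N u * (M * N g) < N u * N u by rewrite ltr_pM2l.
by rewrite -expr2 ltNge H.
Qed.


Lemma N0 : N (fun _ => 0) = 0.
Proof. by rewrite /norm2 inner0l sqrtr0. Qed.

Lemma L0 : Lop (fun _ : Omega => (0 : R)) = (fun _ => 0).
Proof. by apply/funext => x; rewrite /Lop addr0 mul0r. Qed.

Lemma C0 : Cop (fun _ => 0) = (fun _ => 0).
Proof.
rewrite CE inner0l L0 inner0l; apply/funext => x.
by rewrite mul0r oppr0 mul0r addr0.
Qed.

Definition Hset := [set p | L2 p.1 /\ L2 p.2 /\ Hnorm mu p = 1].
Definition SH := [set Hnorm mu (commD (rproj mu psi) p) | p in Hset].

Lemma HcE p : Hnorm mu (commD (rproj mu psi) p) =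
  Num.sqrt (N (Aop p.2) ^+ 2 + N (Cop p.1) ^+ 2).
Proof. by []. Qed.

Lemma SH_ub x : SH x -> x <= M.
Proof.
move=> [[p1 p2] [/= h1 [h2 hn]] <-].
rewrite HcE /=.
have s1 : N p1 ^+ 2 + N p2 ^+ 2 = 1.
  move: hn; rewrite /Hnorm /= => hn.
  by rewrite -(sqr_sqrtr (addr_ge0 (sqr_ge0 (N p1)) (sqr_ge0 (N p2)))) hn expr1n.
have a1 := le_sq (N_ge0 _) (A_bound _ h2).
have a2 := le_sq (N_ge0 _) (C_bound _ h1).
rewrite !exprMn in a1 a2.
have : N (Aop p2) ^+ 2 + N (Cop p1) ^+ 2 <= M ^+ 2.
  have -> : M ^+ 2 = M ^+ 2 * N p2 ^+ 2 + M ^+ 2 * N p1 ^+ 2.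
    by rewrite -mulrDr addrC s1 mulr1.
  exact: lerD.
move=> /ler_wsqrtr; rewrite sqrtr_sqr ger0_norm //; exact: M_ge0.
Qed.

Lemma zp_in f : L2 f -> N f = 1 -> Hset (fun _ => 0, f).
Proof.
move=> hf nf; split => //=; first exact: L2_0.
split => //; rewrite /Hnorm /= N0 nf expr0n expr1n add0r; exact: sqrtr1.
Qed.

Lemma SH_has : has_ubound SH.
Proof. by exists M => x /SH_ub. Qed.

Lemma SH_ne : SH !=set0.
Proof. by exists (Hnorm mu (commD (rproj mu psi) (fun _ => 0, psi))); exists (fun _ => 0, psi) => //; exact: zp_in. Qed.

Lemma main_eq1 : sup SH = M.
Proof.
apply/le_anti/andP; split; first exact: ge_sup SH_ne SH_ub.
apply: ge_sup; first exact: S_ne.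
move=> _ [f [hf nf] <-].
have -> : N (Aop f) = Hnorm mu (commD (rproj mu psi) (fun _ => 0, f)).
  by rewrite HcE /= C0 N0 expr0n addr0 sqrtr_sqr ger0_norm //; exact: N_ge0.
apply: ub_le_sup; first exact: SH_has.
by exists (fun _ => 0, f) => //; exact: zp_in.
Qed.

Lemma main_eq2 : M = sup [set Num.sqrt (inner mu f psi ^+ 2
                       - 2 * inner mu f psi * inner mu (Kop f) psi
                           * inner mu (Kop psi) psi
                       + inner mu (Kop f) psi ^+ 2)
        | f in [set f | L2 f /\ norm2 mu f = 1]].
Proof.
rewrite /M /Sset; congr sup; apply/seteqP; split => _ [f hf <-]; exists f => //;
  by rewrite /norm2 QA //; case: hf.
Qed.

End Main.

Theorem theorem1p8 (R : realType) (mu : {measure set Omega -> \bar R})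
  (hmu : forall (n : nat) (w : Omega0), mu (cyl n w) = ((2 : R) ^- n)%:E)
  (psi : Omega -> R)
  (hpsi : L2 mu psi)
  (hnc : ~ (exists c : R, {ae mu, forall x, psi x = c}))
  (hn1 : norm2 mu psi = 1) :
  opnormH mu (commD (rproj mu psi)) =
    opnorm mu (fun f => Kop (rproj mu psi f) - rproj mu psi (Kop f)) /\
  opnorm mu (fun f => Kop (rproj mu psi f) - rproj mu psi (Kop f)) =
    sup [set Num.sqrt (inner mu f psi ^+ 2
                       - 2 * inner mu f psi * inner mu (Kop f) psi
                           * inner mu (Kop psi) psi
                       + inner mu (Kop f) psi ^+ 2)
        | f in [set f | L2 mu f /\ norm2 mu f = 1]].
Proof.
have e1 := main_eq1 mu hmu psi hpsi hn1.
have e2 := main_eq2 mu hmu psi hpsi hn1.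
change (sup (SH mu psi) = M mu psi /\ M mu psi = sup [set Num.sqrt (inner mu f psi ^+ 2
                       - 2 * inner mu f psi * inner mu (Kop f) psi
                           * inner mu (Kop psi) psi
                       + inner mu (Kop f) psi ^+ 2)
        | f in [set f | L2 mu f /\ norm2 mu f = 1]]).
by split.
Qed.
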